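(* The necessary optimality (stationarity) conditions of $\mathcal J^{\mathrm{dir},1}_d$ with respect to all its variables and those of $\tilde{\mathcal J}^{\mathcal E}_d$ with respect to $(y_0,\dots,y_N,U_d^{(1)},U_d^{(2)},\mu,\nu)$ are equivalent, under the identification $\lambda_k=\lambda^v_k$ for $k=1,\dots,N-1$ (with $\lambda^q$ and $v$ determined by $\lambda^q_{k+1}=(\lambda^v_k-\lambda^v_{k+1})/h$ and the discrete first-order dynamics).
   Context: Setting: $\mathcal Q=\mathbb R^n$, controls in $\mathbb R^m$; smooth $f(q,v)\in\mathbb R^n$, $\rho(q)\in\mathbb R^{n\times m}$, $\mathrm g(q)$ symmetric positive definite, terminal cost $\phi(q,v)$; $q^0,\dot q^0$, $h=T/N$; parameters $\alpha,\gamma\in[0,1]$. Notation: $\bar q_k^\gamma=\gamma q_k+(1-\gamma)q_{k+1}$, $\Delta q_k=(q_{k+1}-q_k)/h$, $f_k^\gamma=f(\bar q_k^\gamma,\Delta q_k)$, $\rho_k^\gamma=\rho(\bar q_k^\gamma)$, $\mathrm g_k^\gamma=\mathrm g(\bar q_k^\gamma)$, $F_k^{(1)}=f_k^\gamma+\rho_k^\gamma U_k^{(1)}$, $F_k^{(2)}=f_k^{1-\gamma}+\rho_k^{1-\gamma}U_k^{(2)}$. Boundary velocities: $v_0^-=\Delta q_0-h\alpha\gamma F_0^{(1)}-h(1-\alpha)(1-\gamma)F_0^{(2)}$, $v_N^+=\Delta q_{N-1}+h\alpha(1-\gamma)F_{N-1}^{(1)}+h(1-\alpha)\gamma F_{N-1}^{(2)}$.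 Direct first-order objective in variables $q_0,\dots,q_N,v_0,\dots,v_N,\lambda^q_1,\dots,\lambda^q_N,\lambda^v_1,\dots,\lambda^v_N\in\mathbb R^n$, $U_k^{(1)},U_k^{(2)}\in\mathbb R^m$, $\mu,\nu$: $\mathcal J^{\mathrm{dir},1}_d=\phi(q_N,v_N)+\mu^\top(q_0-q^0)+\nu^\top(v_0-\dot q^0)+\frac h2\sum_{k=0}^{N-1}\big(\alpha U_k^{(1)\top}\mathrm g_k^\gamma U_k^{(1)}+(1-\alpha)U_k^{(2)\top}\mathrm g_k^{1-\gamma}U_k^{(2)}\big)+h\sum_{k=0}^{N-1}(\lambda^q_{k+1})^\top\big[\tfrac{q_{k+1}-q_k}h-v_k-h\alpha\gamma F_k^{(1)}-h(1-\alpha)(1-\gamma)F_k^{(2)}\big]+h\sum_{k=0}^{N-1}(\lambda^v_{k+1})^\top\big[\tfrac{v_{k+1}-v_k}h-\alpha F_k^{(1)}-(1-\alpha)F_k^{(2)}\big]$. Approximate control-dependent objective: with $y_k=(q_k,\lambda_k)$, $\Delta\lambda_k=(\lambda_{k+1}-\lambda_k)/h$, $\bar\lambda_k^\gamma=\gamma\lambda_k+(1-\gamma)\lambda_{k+1}$, $\tilde L^{\mathcal E}_d(y_k,y_{k+1},U_k^{(1)},U_k^{(2)},h)=h[\alpha(\Delta\lambda_k^\top\Delta q_k+(\bar\lambda_k^\gamma)^\top F_k^{(1)}-\frac12U_k^{(1)\top}\mathrm g_k^\gamma U_k^{(1)})+(1-\alpha)(\Delta\lambda_k^\top\Delta q_k+(\bar\lambda_k^{1-\gamma})^\top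 F_k^{(2)}-\frac12U_k^{(2)\top}\mathrm g_k^{1-\gamma}U_k^{(2)})]$ and $\tilde{\mathcal J}^{\mathcal E}_d=\phi(q_N,v_N^+)+\mu^\top(q_0-q^0)+\nu^\top(v_0^--\dot q^0)+\lambda_N^\top v_N^+-\lambda_0^\top v_0^--\sum_{k=0}^{N-1}\tilde L^{\mathcal E}_d(y_k,y_{k+1},U_k^{(1)},U_k^{(2)},h)$. *)

(* Defs.v *)
From HB Require Import structures.
From mathcomp Require Import all_boot all_order all_algebra.
From mathcomp Require Import all_classical all_reals all_analysis.
Set Implicit Arguments. Unset Strict Implicit. Unset Printing Implicit Defensive.
Import Order.TTheory GRing.Theory Num.Theory.
Import numFieldNormedType.Exports.
Local Open Scope ring_scope.

Definition dotv {R : comRingType} {n : nat} (u v : 'cV[R]_n) : R :=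
  \sum_(i < n) u i 0 * v i 0.

Definition quadf {R : comRingType} {m : nat} (U : 'cV[R]_m) (G : 'M[R]_m) : R :=
  dotv U (G *m U).

Fixpoint Ck {R : realType} {V W : normedModType R} (k : nat) (F : V -> W) : Prop :=
  match k with
  | 0 => continuous F
  | k'.+1 => (forall x, differentiable F x) /\ (forall v : V, Ck k' (fun x => 'D_v F x))
  end.
Definition smooth {R : realType} {V W : normedModType R} (F : V -> W) : Prop :=
  forall k, Ck k F.

Definition sym_posdef {R : realType} {m : nat} (G : 'M[R]_m) : Prop :=
  G^T = G /\ forall U : 'cV[R]_m, U != 0 -> 0 < quadf U G.

Definition pert {R : ringType} {V : lmodType R} (x dx : nat -> V) (t : R) : nat -> V :=
  fun k => x k + t *: dx k.

Section DiscreteOCP.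
Variables (R : realType) (n m : nat).
Variables (f : 'cV[R]_n -> 'cV[R]_n -> 'cV[R]_n)
          (rho : 'cV[R]_n -> 'M[R]_(n, m))
          (g : 'cV[R]_n -> 'M[R]_m)
          (phi : 'cV[R]_n -> 'cV[R]_n -> R)
          (q0 dq0 : 'cV[R]_n) (h alpha gamma : R) (N : nat).

Definition qbar (q : nat -> 'cV[R]_n) (c : R) (k : nat) : 'cV[R]_n :=
  c *: q k + (1 - c) *: q k.+1.
Definition Dq (q : nat -> 'cV[R]_n) (k : nat) : 'cV[R]_n := h^-1 *: (q k.+1 - q k).

Definition F1 (q : nat -> 'cV[R]_n) (U1 : nat -> 'cV[R]_m) (k : nat) : 'cV[R]_n :=
  f (qbar q gamma k) (Dq q k) + rho (qbar q gamma k) *m U1 k.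
Definition F2 (q : nat -> 'cV[R]_n) (U2 : nat -> 'cV[R]_m) (k : nat) : 'cV[R]_n :=
  f (qbar q (1 - gamma) k) (Dq q k) + rho (qbar q (1 - gamma) k) *m U2 k.

Definition v0minus q U1 U2 : 'cV[R]_n :=
  Dq q 0 - (h * alpha * gamma) *: F1 q U1 0
         - (h * (1 - alpha) * (1 - gamma)) *: F2 q U2 0.
Definition vNplus q U1 U2 : 'cV[R]_n :=
  Dq q N.-1 + (h * alpha * (1 - gamma)) *: F1 q U1 N.-1
            + (h * (1 - alpha) * gamma) *: F2 q U2 N.-1.

(* direct first-order objective J^{dir,1}_d; lq k, lv k are lambda^q_k, lambda^v_k
   (only indices 1..N are used) *)
Definition Jdir1 (q v lq lv : nat -> 'cV[R]_n) (U1 U2 : nat -> 'cV[R]_m)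
    (mu nu : 'cV[R]_n) : R :=
  phi (q N) (v N) + dotv mu (q 0 - q0) + dotv nu (v 0 - dq0)
  + h / 2 * \sum_(k < N) (alpha * quadf (U1 k) (g (qbar q gamma k))
                          + (1 - alpha) * quadf (U2 k) (g (qbar q (1 - gamma) k)))
  + h * \sum_(k < N) dotv (lq k.+1)
          (Dq q k - v k - (h * alpha * gamma) *: F1 q U1 k
                   - (h * (1 - alpha) * (1 - gamma)) *: F2 q U2 k)
  + h * \sum_(k < N) dotv (lv k.+1)
          (h^-1 *: (v k.+1 - v k) - alpha *: F1 q U1 k - (1 - alpha) *: F2 q U2 k).

Definition Ltilde (q lam : nat -> 'cV[R]_n) (U1 U2 : nat -> 'cV[R]_m) (k : nat) : R :=
  let Dl := h^-1 *: (lam k.+1 - lam k) in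
  let lbar c := c *: lam k + (1 - c) *: lam k.+1 in
  h * (alpha * (dotv Dl (Dq q k) + dotv (lbar gamma) (F1 q U1 k)
                - 2^-1 * quadf (U1 k) (g (qbar q gamma k)))
       + (1 - alpha) * (dotv Dl (Dq q k) + dotv (lbar (1 - gamma)) (F2 q U2 k)
                - 2^-1 * quadf (U2 k) (g (qbar q (1 - gamma) k)))).

Definition JtildeE (q lam : nat -> 'cV[R]_n) (U1 U2 : nat -> 'cV[R]_m)
    (mu nu : 'cV[R]_n) : R :=
  phi (q N) (vNplus q U1 U2) + dotv mu (q 0 - q0) + dotv nu (v0minus q U1 U2 - dq0)
  + dotv (lam N) (vNplus q U1 U2) - dotv (lam 0) (v0minus q U1 U2)
  - \sum_(k < N) Ltilde q lam U1 U2 k.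

Definition stationary_dir1 q v lq lv U1 U2 mu nu : Prop :=
  forall (dq dv dlq dlv : nat -> 'cV[R]_n) (dU1 dU2 : nat -> 'cV[R]_m)
         (dmu dnu : 'cV[R]_n),
    is_derive (0 : R) (1 : R)
      (fun t : R => Jdir1 (pert q dq t) (pert v dv t) (pert lq dlq t) (pert lv dlv t)
                          (pert U1 dU1 t) (pert U2 dU2 t) (mu + t *: dmu) (nu + t *: dnu))
      0.

Definition stationary_tildeE q lam U1 U2 mu nu : Prop :=
  forall (dq dlam : nat -> 'cV[R]_n) (dU1 dU2 : nat -> 'cV[R]_m) (dmu dnu : 'cV[R]_n),
    is_derive (0 : R) (1 : R)
      (fun t : R => JtildeE (pert q dq t) (pert lam dlam t)
                            (pert U1 dU1 t) (pert U2 dU2 t) (mu + t *: dmu) (nu + t *: dnu))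
      0.

End DiscreteOCP.

(* Main.v *)
Require Import Defs.
From HB Require Import structures.
From mathcomp Require Import all_boot all_order all_algebra.
From mathcomp Require Import all_classical all_reals all_analysis.
From mathcomp Require Import ring lra.
Import Order.TTheory GRing.Theory Num.Theory.
Import numFieldNormedType.Exports.
Local Open Scope ring_scope.
Set Implicit Arguments. Unset Strict Implicit. Unset Printing Implicit Defensive.


Section Curves.
Variable R : realType.

Definition dc (X : normedModType R) (c : R -> X) := derivable c 0 1.

Lemma dc_cst (X : normedModType R) (a : X) : dc (fun _ => a).
Proof. exact: derivable_cst. Qed.

Lemma dc_add (X : normedModType R) (a b : R -> X) :
  dc a -> dc b -> dc (fun t => a t + b t).
Proof. move=> ha hb; exact: derivableD. Qed.

Lemma dc_opp (X : normedModType R) (a : R -> X) :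
  dc a -> dc (fun t => - a t).
Proof. move=> ha; exact: derivableN. Qed.

Lemma dc_sub (X : normedModType R) (a b : R -> X) :
  dc a -> dc b -> dc (fun t => a t - b t).
Proof. move=> ha hb; exact: derivableB. Qed.

Lemma dc_scale (X : normedModType R) (k : R) (a : R -> X) :
  dc a -> dc (fun t => k *: a t).
Proof. move=> ha; exact: derivableZ. Qed.

Lemma is_derive_lin (X : normedModType R) (a b : X) :
  is_derive (0:R) 1 (fun t : R => a + t *: b) b.
Proof.
have h1 : differentiable (fun t : R => t *: b) (0:R).
  by have [] := is_diff_scalel (0:R) b.
have h2 : differentiable (fun t : R => a + t *: b) (0:R).
  exact: differentiableD.
apply: DeriveDef; first exact: diff_derivable.
rewrite deriveE // diffD // diff_cst /=.
have -> : 'd ( *:%R^~ b) (0:R) = ( *:%R^~ b) :> (R -> X) by rewrite diff_val.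
by rewrite add0r scale1r.
Qed.

Lemma dc_lin (X : normedModType R) (a b : X) : dc (fun t => a + t *: b).
Proof. by have [] := is_derive_lin a b. Qed.

Lemma dc_der (X : normedModType R) (c : R -> X) : dc c -> differentiable c 0.
Proof. by move/derivable1_diffP. Qed.

Lemma is_derive_comp (X Y : normedModType R) (F : X -> Y) (c : R -> X) :
  differentiable F (c 0) -> dc c ->
  is_derive (0:R) 1 (fun t => F (c t)) ('d F (c 0) ('D_1 c 0)).
Proof.
move=> dF dcc; have dc0 := dc_der dcc.
have dFc : differentiable (F \o c) 0 by exact: differentiable_comp.
apply: DeriveDef; first exact: diff_derivable.
by rewrite (deriveE _ dFc) diff_comp // /= (deriveE _ dc0).
Qed.

Lemma is_derive_pair (X Y : normedModType R) (a : R -> X) (b : R -> Y) :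
  dc a -> dc b -> is_derive (0:R) 1 (fun t => (a t, b t)) ('D_1 a 0, 'D_1 b 0).
Proof.
move=> ha hb; have da := dc_der ha; have db := dc_der hb.
have dp : differentiable (fun t => (a t, b t)) 0 by exact: differentiable_pair.
apply: DeriveDef; first exact: diff_derivable.
by rewrite (deriveE _ dp) diff_pair // (deriveE _ da) (deriveE _ db).
Qed.

Lemma dc_pair (X Y : normedModType R) (a : R -> X) (b : R -> Y) :
  dc a -> dc b -> dc (fun t => (a t, b t)).
Proof. by move=> ha hb; have [] := is_derive_pair ha hb. Qed.

Lemma dc_comp (X Y : normedModType R) (F : X -> Y) (c : R -> X) :
  (forall x, differentiable F x) -> dc c -> dc (fun t => F (c t)).
Proof. by move=> dF hc; have [] := is_derive_comp (dF (c 0)) hc. Qed.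

Lemma dc_entry p r (M : R -> 'M[R]_(p, r)) (i : 'I_p) (j : 'I_r) :
  dc M -> dc (fun t => M t i j).
Proof. by move=> hM; move/derivable_mxP : hM; apply. Qed.

Lemma D_entry p r (M : R -> 'M[R]_(p, r)) (i : 'I_p) (j : 'I_r) :
  dc M -> 'D_1 (fun t => M t i j) 0 = ('D_1 M 0) i j.
Proof. by move=> hM; rewrite (derive_mx hM) mxE. Qed.

Lemma dc_mulmx p r s (A : R -> 'M[R]_(p, r)) (B : R -> 'M[R]_(r, s)) :
  dc A -> dc B -> dc (fun t => A t *m B t).
Proof.
move=> hA hB; apply/derivable_mxP => i j.
have -> : (fun t => (A t *m B t) i j) = \sum_(k < r) (fun t => A t i k * B t k j).
  by apply/funext => t; rewrite mxE fct_sumE.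
apply: derivable_sum => k; apply: derivableM; exact: dc_entry.
Qed.

Lemma is_derive_dotv p (a b : R -> 'cV[R]_p) :
  dc a -> dc b ->
  is_derive (0:R) 1 (fun t => dotv (a t) (b t))
    (dotv ('D_1 a 0) (b 0) + dotv (a 0) ('D_1 b 0)).
Proof.
move=> ha hb.
have -> : (fun t => dotv (a t) (b t)) = \sum_(k < p) (fun t => a t k 0 * b t k 0).
  by apply/funext => t; rewrite /dotv fct_sumE.
have -> : dotv ('D_1 a 0) (b 0) + dotv (a 0) ('D_1 b 0) =
   \sum_(k < p) (a 0 k 0 *: 'D_1 (fun t => b t k 0) 0 +
                 b 0 k 0 *: 'D_1 (fun t => a t k 0) 0).
  rewrite /dotv -big_split /=; apply: eq_bigr => k _.
  rewrite (@D_entry p 1 a k 0 ha) (@D_entry p 1 b k 0 hb).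
  by rewrite /GRing.scale /= [_ * _ + _ * _]addrC !(mulrC (b 0 k 0)).
apply: is_derive_sum => k.
have := @is_deriveM R R (fun t => a t k 0) (fun t => b t k 0) 0 1 _ _
  (derivableP (@dc_entry p 1 a k 0 ha)) (derivableP (@dc_entry p 1 b k 0 hb)).
done.
Qed.

End Curves.



Section Dot.
Variables (R : realType) (n : nat).
Implicit Types u v w : 'cV[R]_n.
Lemma dotvDl u w v : dotv (u + w) v = dotv u v + dotv w v.
Proof. by rewrite /dotv -big_split; apply: eq_bigr => i _; rewrite mxE mulrDl. Qed.
Lemma dotvDr u w v : dotv v (u + w) = dotv v u + dotv v w.
Proof. by rewrite /dotv -big_split; apply: eq_bigr => i _; rewrite mxE mulrDr. Qed.
Lemma dotvNl u v : dotv (- u) v = - dotv u v.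
Proof. by rewrite /dotv -sumrN; apply: eq_bigr => i _; rewrite mxE mulNr. Qed.
Lemma dotvNr u v : dotv v (- u) = - dotv v u.
Proof. by rewrite /dotv -sumrN; apply: eq_bigr => i _; rewrite mxE mulrN. Qed.
Lemma dotvZl (c : R) u v : dotv (c *: u) v = c * dotv u v.
Proof. by rewrite /dotv mulr_sumr; apply: eq_bigr => i _; rewrite mxE mulrA. Qed.
Lemma dotvZr (c : R) u v : dotv v (c *: u) = c * dotv v u.
Proof. by rewrite /dotv mulr_sumr; apply: eq_bigr => i _; rewrite mxE mulrCA. Qed.
Lemma dotv0l v : dotv 0 v = 0.
Proof. by rewrite /dotv big1 // => i _; rewrite mxE mul0r. Qed.
Lemma dotv0r v : dotv v 0 = 0.
Proof. by rewrite /dotv big1 // => i _; rewrite mxE mulr0. Qed.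
Lemma dotv_self0 v : dotv v v = 0 -> v = 0.
Proof.
move=> /eqP; rewrite /dotv psumr_eq0; last by move=> i _; rewrite -expr2 sqr_ge0.
move=> /allP H; apply/matrixP => i j; rewrite mxE (ord1 j).
have := H i (mem_index_enum _); rewrite -expr2 sqrf_eq0 => /eqP; done.
Qed.
End Dot.

Definition dotvE := (dotvDl, dotvDr, dotvNl, dotvNr, dotvZl, dotvZr, dotv0l, dotv0r).



Section OCP.
Variables (R : realType) (n m : nat).
Variables (f : 'cV[R]_n -> 'cV[R]_n -> 'cV[R]_n)
          (rho : 'cV[R]_n -> 'M[R]_(n, m))
          (g : 'cV[R]_n -> 'M[R]_m)
          (phi : 'cV[R]_n -> 'cV[R]_n -> R)
          (q0 dq0 : 'cV[R]_n) (h alpha gamma : R) (N : nat).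
Hypothesis hN : (0 < N)%N.
Hypothesis hh : h != 0.

Definition Vf (q : nat -> 'cV[R]_n) (U1 U2 : nat -> 'cV[R]_m) (k : nat) : 'cV[R]_n :=
  if (k < N)%N then Dq h q k - (h * alpha * gamma) *: F1 f rho h gamma q U1 k
         - (h * (1 - alpha) * (1 - gamma)) *: F2 f rho h gamma q U2 k
  else vNplus f rho h alpha gamma N q U1 U2.

Lemma VfE q U1 U2 k : (k < N)%N -> Vf q U1 U2 k = Dq h q k - (h * alpha * gamma) *: F1 f rho h gamma q U1 k
         - (h * (1 - alpha) * (1 - gamma)) *: F2 f rho h gamma q U2 k.
Proof. by rewrite /Vf => ->. Qed.
Lemma VfN q U1 U2 : Vf q U1 U2 N = vNplus f rho h alpha gamma N q U1 U2.
Proof. by rewrite /Vf ltnn. Qed.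
Lemma Vf0 q U1 U2 : Vf q U1 U2 0 = v0minus f rho h alpha gamma q U1 U2.
Proof. by rewrite VfE. Qed.

Definition Phi q (v lq lv : nat -> 'cV[R]_n) U1 U2 (nu : 'cV[R]_n) : R :=
  phi (q N) (v N) - phi (q N) (Vf q U1 U2 N) + dotv nu (v 0 - Vf q U1 U2 0)
  - h * \sum_(k < N) dotv (lq k.+1) (v k - Vf q U1 U2 k)
  + \sum_(k < N) dotv (lv k.+1) ((v k.+1 - Vf q U1 U2 k.+1) - (v k - Vf q U1 U2 k)).

Lemma sumrMl' (I : 'I_N -> R) (c : R) : \sum_(i < N) c * I i = c * \sum_(i < N) I i.
Proof. by rewrite mulr_sumr. Qed.

Lemma Jident q v lq lv U1 U2 mu nu :
  Jdir1 f rho g phi q0 dq0 h alpha gamma N q v lq lv U1 U2 mu nu =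
  JtildeE f rho g phi q0 dq0 h alpha gamma N q lv U1 U2 mu nu + Phi q v lq lv U1 U2 nu.
Proof.
have tel : dotv (lv N) (Vf q U1 U2 N) = dotv (lv 0) (Vf q U1 U2 0) +
    \sum_(k < N) (dotv (lv k.+1) (Vf q U1 U2 k.+1) - dotv (lv k) (Vf q U1 U2 k)).
  rewrite -(big_mkord xpredT (fun k => dotv (lv k.+1) (Vf q U1 U2 k.+1) - dotv (lv k) (Vf q U1 U2 k)))
     telescope_sumr //.
  by rewrite addrC subrK.
have key : \sum_(k < N) (h / 2 * (alpha * quadf (U1 k) (g (qbar q gamma k))
                          + (1 - alpha) * quadf (U2 k) (g (qbar q (1 - gamma) k)))
   + h * dotv (lq k.+1) (Dq h q k - v k - (h * alpha * gamma) *: F1 f rho h gamma q U1 k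
                   - (h * (1 - alpha) * (1 - gamma)) *: F2 f rho h gamma q U2 k)
   + h * dotv (lv k.+1)
          (h^-1 *: (v k.+1 - v k) - alpha *: F1 f rho h gamma q U1 k - (1 - alpha) *: F2 f rho h gamma q U2 k)
   - (dotv (lv k.+1) (Vf q U1 U2 k.+1) - dotv (lv k) (Vf q U1 U2 k))
   + Ltilde f rho g h alpha gamma q lv U1 U2 k
   + h * dotv (lq k.+1) (v k - Vf q U1 U2 k)
   - dotv (lv k.+1) ((v k.+1 - Vf q U1 U2 k.+1) - (v k - Vf q U1 U2 k))) = 0.
  apply: big1 => k _; rewrite /Ltilde /= (@VfE q U1 U2 k (ltn_ord k)).
  rewrite !dotvE; field; exact: hh.
rewrite /Jdir1 /JtildeE /Phi -VfN -Vf0 tel.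
move: key; rewrite /Ltilde /=.
rewrite !(sumrB, big_split, sumrMl') /= => key.
rewrite !dotvE.
apply/eqP; rewrite -subr_eq0; apply/eqP; rewrite -[RHS]key.
ring.
Qed.
Lemma PhiV0 q lq lv U1 U2 nu : Phi q (Vf q U1 U2) lq lv U1 U2 nu = 0.
Proof.
rewrite /Phi !subrr dotv0r !big1 => [|k _|k _]; rewrite ?subrr ?dotv0r //.
by rewrite mulr0 subr0 !addr0.
Qed.

Lemma Jdir1_lv q lq lam lam' U1 U2 mu nu :
  (forall k, (1 <= k <= N.-1)%N -> lam k = lam' k) ->
  Jdir1 f rho g phi q0 dq0 h alpha gamma N q (Vf q U1 U2) lq lam U1 U2 mu nu =
  Jdir1 f rho g phi q0 dq0 h alpha gamma N q (Vf q U1 U2) lq lam' U1 U2 mu nu.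
Proof.
move=> Hl; rewrite /Jdir1; congr (_ + _ * _).
have [N' eN] : exists N', N = N'.+1 by exists N.-1; rewrite prednK.
move: Hl; rewrite eN => Hl.
rewrite !big_ord_recr /=; congr (_ + _).
  by apply: eq_bigr => k _; rewrite Hl //=.
have H : forall u, dotv u (h^-1 *: (Vf q U1 U2 N'.+1 - Vf q U1 U2 N') -
     alpha *: F1 f rho h gamma q U1 N' - (1 - alpha) *: F2 f rho h gamma q U2 N') = 0.
  have h1 : (N'.+1 < N)%N = false by rewrite eN ltnn.
  have h2 : (N' < N)%N by rewrite eN.
  have h3 : N.-1 = N' by rewrite eN.
  move=> u; rewrite /Vf h1 h2 /vNplus h3.
  rewrite !dotvE; field; exact: hh.
by rewrite !H.
Qed.

Lemma JtildeE_lam q lam lam' U1 U2 mu nu :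
  (forall k, (1 <= k <= N.-1)%N -> lam k = lam' k) ->
  JtildeE f rho g phi q0 dq0 h alpha gamma N q lam U1 U2 mu nu =
  JtildeE f rho g phi q0 dq0 h alpha gamma N q lam' U1 U2 mu nu.
Proof.
move=> Hl.
have E1 := Jident q (Vf q U1 U2) 0 lam U1 U2 mu nu.
have E2 := Jident q (Vf q U1 U2) 0 lam' U1 U2 mu nu.
rewrite !PhiV0 !addr0 in E1 E2.
by rewrite -E1 -E2; apply: Jdir1_lv.
Qed.

End OCP.

Unset Implicit Arguments. Set Strict Implicit.

Set Implicit Arguments.
Section Isd.
Variable R : realType.
Lemma isdD (a b : R -> R) da db : is_derive (0:R) 1 a da -> is_derive (0:R) 1 b db ->
  is_derive (0:R) 1 (fun t => a t + b t) (da + db).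
Proof. move=> ha hb; exact: is_deriveD. Qed.
Lemma isdB (a b : R -> R) da db : is_derive (0:R) 1 a da -> is_derive (0:R) 1 b db ->
  is_derive (0:R) 1 (fun t => a t - b t) (da - db).
Proof. move=> ha hb; exact: is_deriveB. Qed.
Lemma isdMl (c : R) (a : R -> R) da : is_derive (0:R) 1 a da ->
  is_derive (0:R) 1 (fun t => c * a t) (c * da).
Proof. move=> ha; exact: is_deriveZ. Qed.
Lemma isd_sum p (F : 'I_p -> R -> R) (dF : 'I_p -> R) :
  (forall k, is_derive (0:R) 1 (F k) (dF k)) ->
  is_derive (0:R) 1 (fun t => \sum_(k < p) F k t) (\sum_(k < p) dF k).
Proof.
move=> H; have -> : (fun t => \sum_(k < p) F k t) = \sum_(k < p) F k.
  by apply/funext => t; rewrite fct_sumE.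
exact: is_derive_sum.
Qed.
Lemma isd_dotv0 p (a e : R -> 'cV[R]_p) : dc a -> dc e -> e 0 = 0 ->
  is_derive (0:R) 1 (fun t => dotv (a t) (e t)) (dotv (a 0) ('D_1 e 0)).
Proof.
move=> ha he e0; apply: is_derive_eq; first exact: is_derive_dotv.
by rewrite e0 dotv0r add0r.
Qed.
Lemma pert0 (V : lmodType R) (x dx : nat -> V) : pert x dx 0 = x.
Proof. by apply/funext => k; rewrite /pert scale0r addr0. Qed.
Lemma dcL (X : normedModType R) (a b : X) : dc (fun t : R => a + t *: b).
Proof. exact: dc_lin. Qed.
Lemma isdL (X : normedModType R) (a b : X) : is_derive (0:R) 1 (fun t : R => a + t *: b) b.
Proof. exact: is_derive_lin. Qed.
End Isd.
Unset Implicit Arguments.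
Arguments dcL {R X} a b.
Arguments isdL {R X} a b.

Section Deriv.
Variables (R : realType) (n m : nat).
Variables (f : 'cV[R]_n -> 'cV[R]_n -> 'cV[R]_n)
          (rho : 'cV[R]_n -> 'M[R]_(n, m))
          (phi : 'cV[R]_n -> 'cV[R]_n -> R)
          (h alpha gamma : R) (N : nat).
Hypothesis HF : forall x, differentiable (fun p : 'cV[R]_n * 'cV[R]_n => f p.1 p.2) x.
Hypothesis Hrho : forall x, differentiable rho x.
Hypothesis HP : forall x, differentiable (fun p : 'cV[R]_n * 'cV[R]_n => phi p.1 p.2) x.
Variables (q dq : nat -> 'cV[R]_n) (U1 dU1 U2 dU2 : nat -> 'cV[R]_m).

Notation VF := (Vf f rho h alpha gamma N).

Lemma dc_Dq k : dc (fun t => Dq h (pert q dq t) k).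
Proof. by rewrite /Dq; apply: dc_scale; apply: dc_sub; exact: dcL. Qed.
Lemma dc_qbar c k : dc (fun t => qbar (pert q dq t) c k).
Proof. by rewrite /qbar; apply: dc_add; apply: dc_scale; exact: dcL. Qed.
Lemma dc_fq c k : dc (fun t => f (qbar (pert q dq t) c k) (Dq h (pert q dq t) k)).
Proof. exact: (dc_comp HF (dc_pair (dc_qbar c k) (dc_Dq k))). Qed.
Lemma dc_rhoU c (U dU : nat -> 'cV[R]_m) k :
  dc (fun t => rho (qbar (pert q dq t) c k) *m pert U dU t k).
Proof. by apply: dc_mulmx; [exact: (dc_comp Hrho (dc_qbar c k)) | exact: dcL]. Qed.
Lemma dc_F1 k : dc (fun t => F1 f rho h gamma (pert q dq t) (pert U1 dU1 t) k).
Proof. by rewrite /F1; apply: dc_add; [exact: dc_fq | exact: dc_rhoU]. Qed.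
Lemma dc_F2 k : dc (fun t => F2 f rho h gamma (pert q dq t) (pert U2 dU2 t) k).
Proof. by rewrite /F2; apply: dc_add; [exact: dc_fq | exact: dc_rhoU]. Qed.
Lemma dc_V k : dc (fun t => VF (pert q dq t) (pert U1 dU1 t) (pert U2 dU2 t) k).
Proof.
rewrite /Vf; case: (k < N)%N.
  apply: dc_sub; [apply: dc_sub; [exact: dc_Dq | apply: dc_scale; exact: dc_F1] |
    apply: dc_scale; exact: dc_F2].
rewrite /vNplus; apply: dc_add; [apply: dc_add; [exact: dc_Dq|apply: dc_scale; exact: dc_F1]|
  apply: dc_scale; exact: dc_F2].
Qed.

Variables (v dv lq dlq lv dlv : nat -> 'cV[R]_n) (nu dnu : 'cV[R]_n).
Notation PHI := (Phi f rho phi h alpha gamma N).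
Notation Vc := (fun k t => VF (pert q dq t) (pert U1 dU1 t) (pert U2 dU2 t) k).

Lemma Phi_derive :
  (forall k, (k <= N)%N -> v k = VF q U1 U2 k) ->
  is_derive (0:R) 1 (fun t => PHI (pert q dq t) (pert v dv t) (pert lq dlq t) (pert lv dlv t)
                                   (pert U1 dU1 t) (pert U2 dU2 t) (nu + t *: dnu))
   ('d (fun p : 'cV[R]_n * 'cV[R]_n => phi p.1 p.2) (q N, v N)
        (0, dv N - 'D_1 (Vc N) 0)
    + dotv nu (dv 0 - 'D_1 (Vc 0) 0)
    - h * \sum_(k < N) dotv (lq k.+1) (dv k - 'D_1 (Vc k) 0)
    + \sum_(k < N) dotv (lv k.+1) ((dv k.+1 - 'D_1 (Vc k.+1) 0) - (dv k - 'D_1 (Vc k) 0))).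
Proof.
move=> Hv.
pose w k := dv k - 'D_1 (Vc k) 0.
have dVc k : dc (Vc k) := dc_V k.
have Vc0 k : Vc k 0 = VF q U1 U2 k by rewrite /= !pert0.
pose e k t := (v k + t *: dv k) - Vc k t.
have de k : dc (e k) := dc_sub (dcL _ _) (dVc k).
have De k : 'D_1 (e k) 0 = w k.
  have := is_deriveB (isdL (v k) (dv k)) (derivableP (dVc k)).
  by move=> H; rewrite -[RHS](@derive_val _ _ _ _ _ _ _ H).
have e0 k : (k <= N)%N -> e k 0 = 0.
  by move=> kN; rewrite /e scale0r addr0 Vc0 Hv // subrr.
pose P := fun p : 'cV[R]_n * 'cV[R]_n => phi p.1 p.2.
have dA1 := is_derive_comp (HP ((q N + 0 *: dq N), (v N + 0 *: dv N)))
     (dc_pair (dcL (q N) (dq N)) (dcL (v N) (dv N))).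
have dA2 := is_derive_comp (HP ((q N + 0 *: dq N), Vc N 0))
     (dc_pair (dcL (q N) (dq N)) (dVc N)).
have dC := isd_dotv0 (dcL nu dnu) (de 0%N) (e0 0%N (leq0n _)).
have dS1 := isd_sum (fun k : 'I_N => fun t => dotv (lq k.+1 + t *: dlq k.+1) (e k t))
   (fun k => dotv (lq k.+1 + 0 *: dlq k.+1) ('D_1 (e k) 0))
   (fun k => isd_dotv0 (dcL _ _) (de k) (e0 k (ltnW (ltn_ord k)))).
have de2 k : dc (fun t => e k.+1 t - e k t) := dc_sub (de k.+1) (de k).
have De2 (k : 'I_N) : 'D_1 (fun t => e k.+1 t - e k t) 0 = w k.+1 - w k.
  have := is_deriveB (derivableP (de k.+1)) (derivableP (de k)).
  by move=> H; rewrite -!De -[RHS](@derive_val _ _ _ _ _ _ _ H).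
have e20 (k : 'I_N) : e k.+1 0 - e k 0 = 0 by rewrite !e0 ?subrr // ltnW.
have dS2 := isd_sum (fun k : 'I_N => fun t => dotv (lv k.+1 + t *: dlv k.+1) (e k.+1 t - e k t))
   (fun k => dotv (lv k.+1 + 0 *: dlv k.+1) ('D_1 (fun t => e k.+1 t - e k t) 0))
   (fun k => isd_dotv0 (dcL _ _) (de2 k) (e20 k)).
have := isdD (isdB (isdD (isdB dA1 dA2) dC) (isdMl h dS1)) dS2.
move=> H; apply: (is_derive_eq H).
clearbody e.
have Dp1 : 'D_1 (fun t : R => (q N + t *: dq N, v N + t *: dv N)) 0 = (dq N, dv N).
  rewrite (@derive_val _ _ _ _ _ _ _ (is_derive_pair (dcL (q N) (dq N)) (dcL (v N) (dv N)))).
  by rewrite !(@derive_val _ _ _ _ _ _ _ (isdL _ _)).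
have Dp2 : 'D_1 (fun t : R => (q N + t *: dq N, Vc N t)) 0 = (dq N, 'D_1 (Vc N) 0).
  rewrite (@derive_val _ _ _ _ _ _ _ (is_derive_pair (dcL (q N) (dq N)) (dVc N))).
  by rewrite !(@derive_val _ _ _ _ _ _ _ (isdL _ _)).
rewrite Dp1.
rewrite Dp2.
rewrite !scale0r.
rewrite !addr0.
rewrite !pert0.
rewrite -(Hv N (leqnn N)).
rewrite (De 0%N).
have -> : \sum_(k < N) dotv (lq k.+1 + 0 *: dlq k.+1) ('D_1 (e k) 0) = \sum_(k < N) dotv (lq k.+1) (w k).
  by apply: eq_bigr => k _; rewrite (De k) scale0r addr0.
have -> : \sum_(k < N) dotv (lv k.+1 + 0 *: dlv k.+1) ('D_1 (fun t => e k.+1 t - e k t) 0)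
   = \sum_(k < N) dotv (lv k.+1) (w k.+1 - w k).
  by apply: eq_bigr => k _; rewrite (De2 k) scale0r addr0.
rewrite -linearB /=.
have -> : ((dq N, dv N) - (dq N, 'D_1 (Vc N) 0) : 'cV[R]_n * 'cV[R]_n) = (0, w N).
  by rewrite /w; congr pair; rewrite /= subrr.
by [].
Qed.
End Deriv.


Lemma smooth_diff (R : realType) (V W : normedModType R) (F : V -> W) :
  smooth F -> forall x, differentiable F x.
Proof. by move=> H; have [] := H 1%N. Qed.

Lemma lin_der0 (R : realType) (A B : R) :
  is_derive (0:R) 1 (fun t : R => A + t * B) 0 -> B = 0.
Proof.
move=> H; have H2 : is_derive (0:R) 1 (fun t : R => A + t * B) B := isdL A B.
by rewrite -(@derive_val _ _ _ _ _ _ _ H2) (@derive_val _ _ _ _ _ _ _ H).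
Qed.

Lemma pertz (R : realType) (V : lmodType R) (x : nat -> V) (t : R) : pert x (fun _ => 0) t = x.
Proof. by apply/funext => k; rewrite /pert scaler0 addr0. Qed.

Lemma sum_pick (R : realType) (N k : nat) (F : nat -> R) : (k < N)%N ->
  \sum_(j < N) (if ((j : nat) == k)%N then F j else 0) = F k.
Proof.
move=> kN; rewrite (bigD1 (Ordinal kN)) //= eqxx big1 ?addr0 // => j hj.
rewrite ifN //; apply: contra hj => /eqP H; apply/eqP/val_inj => /=; exact: H.
Qed.

Lemma pair0D (R : realType) (n : nat) (a b : 'cV[R]_n) :
  ((0 : 'cV[R]_n), a + b) = ((0, a) + (0, b) : 'cV[R]_n * 'cV[R]_n).
Proof. by rewrite -[RHS]/(0 + 0, a + b) addr0. Qed.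

Lemma pair0Z (R : realType) (n : nat) (c : R) (a : 'cV[R]_n) :
  ((0 : 'cV[R]_n), c *: a) = (c *: (0, a) : 'cV[R]_n * 'cV[R]_n).
Proof. by rewrite -[RHS]/(c *: 0, c *: a) scaler0. Qed.

Arguments lin_der0 {R A B}.
Arguments sum_pick {R N k} F.
Arguments pertz {R V} x t.

Section Main.
Variables (R : realType) (n m : nat).
Variables (f : 'cV[R]_n -> 'cV[R]_n -> 'cV[R]_n)
          (rho : 'cV[R]_n -> 'M[R]_(n, m))
          (g : 'cV[R]_n -> 'M[R]_m)
          (phi : 'cV[R]_n -> 'cV[R]_n -> R)
          (q0 dq0 : 'cV[R]_n) (h alpha gamma : R) (N : nat).
Hypothesis hN : (0 < N)%N.
Hypothesis hh : h != 0.

Notation J1 := (Jdir1 f rho g phi q0 dq0 h alpha gamma N).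
Notation X q v U1 U2 j := (Dq h q j - v j - (h * alpha * gamma) *: F1 f rho h gamma q U1 j
                   - (h * (1 - alpha) * (1 - gamma)) *: F2 f rho h gamma q U2 j).
Notation Y q v U1 U2 j := (h^-1 *: (v j.+1 - v j) - alpha *: F1 f rho h gamma q U1 j
                   - (1 - alpha) *: F2 f rho h gamma q U2 j).

Lemma J_lq_lin q v lq dlq lv U1 U2 mu nu t :
  J1 q v (pert lq dlq t) lv U1 U2 mu nu =
  J1 q v lq lv U1 U2 mu nu + t * (h * \sum_(j < N) dotv (dlq j.+1) (X q v U1 U2 j)).
Proof.
rewrite /Jdir1 /pert.
have -> : \sum_(k < N) dotv (lq k.+1 + t *: dlq k.+1) (X q v U1 U2 k) =
   \sum_(k < N) dotv (lq k.+1) (X q v U1 U2 k) + t * \sum_(k < N) dotv (dlq k.+1) (X q v U1 U2 k).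
  by rewrite mulr_sumr -big_split; apply: eq_bigr => k _; rewrite dotvDl dotvZl.
ring.
Qed.

Lemma J_lv_lin q v lq lv dlv U1 U2 mu nu t :
  J1 q v lq (pert lv dlv t) U1 U2 mu nu =
  J1 q v lq lv U1 U2 mu nu + t * (h * \sum_(j < N) dotv (dlv j.+1) (Y q v U1 U2 j)).
Proof.
rewrite /Jdir1 /pert.
have -> : \sum_(k < N) dotv (lv k.+1 + t *: dlv k.+1) (Y q v U1 U2 k) =
   \sum_(k < N) dotv (lv k.+1) (Y q v U1 U2 k) + t * \sum_(k < N) dotv (dlv k.+1) (Y q v U1 U2 k).
  by rewrite mulr_sumr -big_split; apply: eq_bigr => k _; rewrite dotvDl dotvZl.
ring.
Qed.


Lemma stat_v q v lq lv U1 U2 mu nu :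
  stationary_dir1 f rho g phi q0 dq0 h alpha gamma N q v lq lv U1 U2 mu nu ->
  forall k, (k <= N)%N -> v k = Vf f rho h alpha gamma N q U1 U2 k.
Proof.
move=> Hst.
have Hlt : forall k, (k < N)%N -> v k = Vf f rho h alpha gamma N q U1 U2 k.
  move=> k kN.
  pose dlq := fun j => if (j == k.+1)%N then X q v U1 U2 k else 0.
  have H := Hst (fun _ => 0) (fun _ => 0) dlq (fun _ => 0) (fun _ => 0) (fun _ => 0) 0 0.
  have H' : is_derive (0:R) 1 (fun t : R => J1 q v lq lv U1 U2 mu nu
        + t * (h * \sum_(j < N) dotv (dlq j.+1) (X q v U1 U2 j))) 0.
    have E : (fun t : R => J1 (pert q (fun _ => 0) t) (pert v (fun _ => 0) t) (pert lq dlq t)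
          (pert lv (fun _ => 0) t) (pert U1 (fun _ => 0) t) (pert U2 (fun _ => 0) t)
          (mu + t *: 0) (nu + t *: 0)) = (fun t : R => J1 q v lq lv U1 U2 mu nu
        + t * (h * \sum_(j < N) dotv (dlq j.+1) (X q v U1 U2 j))).
      by apply/funext => t; rewrite !pertz !scaler0 !addr0 J_lq_lin.
    by rewrite -E.
  have := lin_der0 H'.
  have -> : \sum_(j < N) dotv (dlq j.+1) (X q v U1 U2 j) =
      \sum_(j < N) (if ((j : nat) == k)%N then dotv (X q v U1 U2 k) (X q v U1 U2 j) else 0).
    apply: eq_bigr => j _; rewrite /dlq eqSS; case: ifP => // _; exact: dotv0l.
  rewrite (sum_pick (fun j => dotv (X q v U1 U2 k) (X q v U1 U2 j))) // => /eqP; rewrite mulf_eq0 (negbTE hh) /= => /eqP /dotv_self0 HX.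
  rewrite (VfE _ _ _ _ _ _ _ _ kN); apply/matrixP => i j.
  have := congr1 (fun M : 'cV[R]_n => M i j) HX; rewrite !mxE => HX'.
  lra.
move=> k; rewrite leq_eqVlt => /orP [/eqP -> | ]; last exact: Hlt.
have [N' eN] : exists N', N = N'.+1 by exists N.-1; rewrite prednK.
pose dlv := fun j => if (j == N)%N then Y q v U1 U2 N' else 0.
have H := Hst (fun _ => 0) (fun _ => 0) (fun _ => 0) dlv (fun _ => 0) (fun _ => 0) 0 0.
have H' : is_derive (0:R) 1 (fun t : R => J1 q v lq lv U1 U2 mu nu
      + t * (h * \sum_(j < N) dotv (dlv j.+1) (Y q v U1 U2 j))) 0.
  have E : (fun t : R => J1 (pert q (fun _ => 0) t) (pert v (fun _ => 0) t) (pert lq (fun _ => 0) t)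
        (pert lv dlv t) (pert U1 (fun _ => 0) t) (pert U2 (fun _ => 0) t)
        (mu + t *: 0) (nu + t *: 0)) = (fun t : R => J1 q v lq lv U1 U2 mu nu
      + t * (h * \sum_(j < N) dotv (dlv j.+1) (Y q v U1 U2 j))).
    by apply/funext => t; rewrite !pertz !scaler0 !addr0 J_lv_lin.
  by rewrite -E.
have := lin_der0 H'.
have -> : \sum_(j < N) dotv (dlv j.+1) (Y q v U1 U2 j) =
    \sum_(j < N) (if ((j : nat) == N')%N then dotv (Y q v U1 U2 N') (Y q v U1 U2 j) else 0).
  apply: eq_bigr => j _; rewrite /dlv.
  have hE : forall x : nat, (x.+1 == N)%N = (x == N') by move=> x; rewrite eN eqSS.
  rewrite hE.
  case: ifP => // _; exact: dotv0l.
rewrite (sum_pick (fun j => dotv (Y q v U1 U2 N') (Y q v U1 U2 j))) ?eN // => /eqP; rewrite mulf_eq0 (negbTE hh) /= => /eqP /dotv_self0 HY.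
have N'N : (N' < N)%N by rewrite eN.
have HN' := Hlt N' N'N.
rewrite (VfE _ _ _ _ _ _ _ _ N'N) in HN'.
rewrite VfN /vNplus /=.
apply/matrixP => i j.
have := congr1 (fun M : 'cV[R]_n => M i j) HY; rewrite !mxE => HY'.
have := congr1 (fun M : 'cV[R]_n => M i j) HN'; rewrite !mxE => HN''.
move: HY' HN''.
set A := f (qbar q gamma N') _ _ _ + _.
set B := f (qbar q (1 - gamma) N') _ _ _ + _.
set x := v N'.+1 i j. set y := v N' i j. set d := h^-1 * (q N'.+1 i j - q N' i j).
move=> HY' HN''.
have Hz : h^-1 * (x - y) = alpha * A + (1 - alpha) * B by lra.
have Hx : x = h * (h^-1 * (x - y)) + y by field.
rewrite Hx Hz HN''; ring.
Qed.

Lemma final_alg (G nu : 'cV[R]_n) (Lf : 'cV[R]_n -> R) (lq lv w : nat -> 'cV[R]_n) :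
  (forall x, dotv G x = Lf x) -> lv N = - G -> lq 1%N = h^-1 *: (nu - lv 1%N) ->
  (forall k, (0 < k)%N -> lq k.+1 = h^-1 *: (lv k - lv k.+1)) ->
  Lf (w N) + dotv nu (w 0%N) - h * \sum_(k < N) dotv (lq k.+1) (w k)
    + \sum_(k < N) dotv (lv k.+1) (w k.+1 - w k) = 0.
Proof.
move=> Hrepr HlvN Hlq1 Hlq.
pose a k := if (k == 0)%N then dotv nu (w 0%N) else dotv (lv k) (w k).
have per : forall k, dotv (lv k.+1) (w k.+1 - w k) - h * dotv (lq k.+1) (w k) = a k.+1 - a k.
  move=> k; rewrite /a /=; case: k => [|k] /=.
    by rewrite Hlq1 !dotvE; field.
  by rewrite Hlq // !dotvE; field.
have HS : \sum_(k < N) dotv (lv k.+1) (w k.+1 - w k) - h * \sum_(k < N) dotv (lq k.+1) (w k)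
     = a N - a 0%N.
  rewrite mulr_sumr -sumrB.
  rewrite -(big_mkord xpredT (fun k => dotv (lv k.+1) (w k.+1 - w k) - h * dotv (lq k.+1) (w k))).
  rewrite -(telescope_sumr a (leq0n N)).
  by apply: eq_bigr => k _; rewrite per.
have -> : Lf (w N) + dotv nu (w 0%N) - h * \sum_(k < N) dotv (lq k.+1) (w k)
    + \sum_(k < N) dotv (lv k.+1) (w k.+1 - w k) =
    Lf (w N) + dotv nu (w 0%N) + (\sum_(k < N) dotv (lv k.+1) (w k.+1 - w k)
       - h * \sum_(k < N) dotv (lq k.+1) (w k)) by ring.
rewrite HS /a eqxx ifN; last by rewrite -lt0n.
rewrite HlvN dotvNl Hrepr; ring.
Qed.

Lemma zero_expr (Lf : 'cV[R]_n -> R) (nu : 'cV[R]_n) (lq lv w : nat -> 'cV[R]_n) :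
  Lf 0 = 0 -> (forall k, w k = 0) ->
  Lf (w N) + dotv nu (w 0%N) - h * \sum_(k < N) dotv (lq k.+1) (w k)
    + \sum_(k < N) dotv (lv k.+1) (w k.+1 - w k) = 0.
Proof.
move=> L0 Hw; rewrite !Hw L0 dotv0r big1 => [|k _]; last by rewrite Hw dotv0r.
rewrite big1 => [|k _]; last by rewrite !Hw subrr dotv0r.
by rewrite mulr0 !addr0 subr0.
Qed.
End Main.


Lemma grad_repr (R : realType) (n : nat) (L : 'cV[R]_n -> R) :
  {morph L : a b / a + b} -> (forall (c : R) a, L (c *: a) = c * L a) ->
  forall x, dotv (\col_i L (delta_mx i 0)) x = L x.
Proof.
move=> LD LZ x.
have L0 : L 0 = 0 by rewrite -(scale0r (0 : 'cV[R]_n)) LZ mul0r.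
rewrite [in RHS](matrix_sum_delta x) (big_morph L LD L0) /dotv.
apply: eq_bigr => i _; rewrite (big_morph L LD L0) big_ord1 LZ mxE mulrC.
by rewrite (ord1 (0 : 'I_1)).
Qed.

Theorem mainTheorem10 (R : realType) (n m : nat)
    (f : 'cV[R]_n -> 'cV[R]_n -> 'cV[R]_n)
    (rho : 'cV[R]_n -> 'M[R]_(n, m))
    (g : 'cV[R]_n -> 'M[R]_m)
    (phi : 'cV[R]_n -> 'cV[R]_n -> R)
    (q0 dq0 : 'cV[R]_n) (T : R) (N : nat) (alpha gamma : R) :
  smooth (fun p : 'cV[R]_n * 'cV[R]_n => f p.1 p.2) ->
  smooth rho ->
  smooth g ->
  (forall q, sym_posdef (g q)) ->
  smooth (fun p : 'cV[R]_n * 'cV[R]_n => phi p.1 p.2) ->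
  0 < T -> (0 < N)%N ->
  0 <= alpha <= 1 -> 0 <= gamma <= 1 ->
  let h := T / N%:R in
  (forall (q v lq lv : nat -> 'cV[R]_n) (U1 U2 : nat -> 'cV[R]_m) (mu nu : 'cV[R]_n),
     stationary_dir1 f rho g phi q0 dq0 h alpha gamma N q v lq lv U1 U2 mu nu ->
     forall lam : nat -> 'cV[R]_n,
       (forall k, (1 <= k <= N.-1)%N -> lam k = lv k) ->
       stationary_tildeE f rho g phi q0 dq0 h alpha gamma N q lam U1 U2 mu nu)
  /\
  (forall (q lam : nat -> 'cV[R]_n) (U1 U2 : nat -> 'cV[R]_m) (mu nu : 'cV[R]_n),
     stationary_tildeE f rho g phi q0 dq0 h alpha gamma N q lam U1 U2 mu nu ->
     exists v lq lv : nat -> 'cV[R]_n,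
       (forall k, (1 <= k <= N.-1)%N -> lv k = lam k) /\
       (forall k, (1 <= k <= N.-1)%N -> lq k.+1 = h^-1 *: (lv k - lv k.+1)) /\
       (forall k, (k < N)%N ->
          v k = Dq h q k - (h * alpha * gamma) *: F1 f rho h gamma q U1 k
                - (h * (1 - alpha) * (1 - gamma)) *: F2 f rho h gamma q U2 k) /\
       v N = vNplus f rho h alpha gamma N q U1 U2 /\
       stationary_dir1 f rho g phi q0 dq0 h alpha gamma N q v lq lv U1 U2 mu nu).
Proof.
move=> HF HR _ _ HP hT hN _ _ h.
have hh : h != 0.
  by rewrite /h; apply: lt0r_neq0; apply: divr_gt0 => //; rewrite ltr0n.
have HFd := smooth_diff _ _ _ _ HF; have HRd := smooth_diff _ _ _ _ HR; have HPd := smooth_diff _ _ _ _ HP.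
split.
- move=> q v lq lv U1 U2 mu nu Hst lam Hlam dq dlam dU1 dU2 dmu dnu.
  have Hv := stat_v _ _ _ _ _ _ _ _ _ _ _ _ _ hN hh _ _ _ _ _ _ _ _ Hst.
  pose dv k := 'D_1 (fun t => Vf f rho h alpha gamma N (pert q dq t) (pert U1 dU1 t) (pert U2 dU2 t) k) 0.
  have HD := Hst dq dv (fun _ => 0) dlam dU1 dU2 dmu dnu.
  have HPh := @Phi_derive R n m f rho phi h alpha gamma N HFd HRd HPd q dq U1 dU1 U2 dU2
      v dv lq (fun _ => 0) lv dlam nu dnu Hv.
  have E : (fun t => JtildeE f rho g phi q0 dq0 h alpha gamma N (pert q dq t) (pert lam dlam t)
               (pert U1 dU1 t) (pert U2 dU2 t) (mu + t *: dmu) (nu + t *: dnu)) =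
           (fun t => Jdir1 f rho g phi q0 dq0 h alpha gamma N (pert q dq t) (pert v dv t)
               (pert lq (fun _ => 0) t) (pert lv dlam t) (pert U1 dU1 t) (pert U2 dU2 t)
               (mu + t *: dmu) (nu + t *: dnu)
             - Phi f rho phi h alpha gamma N (pert q dq t) (pert v dv t)
               (pert lq (fun _ => 0) t) (pert lv dlam t) (pert U1 dU1 t) (pert U2 dU2 t)
               (nu + t *: dnu)).
    apply/funext => t; rewrite Jident // addrK.
    by apply: JtildeE_lam => // k hk; rewrite /pert Hlam.
  rewrite E; apply: (is_derive_eq (isdB HD HPh)).
  apply: (etrans (sub0r _)); apply/eqP; rewrite oppr_eq0; apply/eqP.
  apply: (@zero_expr R n h N
    (fun x => 'd (fun p : 'cV[R]_n * 'cV[R]_n => phi p.1 p.2) (q N, v N) (0, x)) nu lq lv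
    (fun k => dv k - 'D_1 (fun t => Vf f rho h alpha gamma N (pert q dq t) (pert U1 dU1 t) (pert U2 dU2 t) k) 0)).
    by rewrite /= -[(0, 0)]/(0 : 'cV[R]_n * 'cV[R]_n) linear0.
  by move=> k; rewrite /dv subrr.
- move=> q lam U1 U2 mu nu Hst.
  pose v := Vf f rho h alpha gamma N q U1 U2.
  pose L := fun x : 'cV[R]_n => 'd (fun p : 'cV[R]_n * 'cV[R]_n => phi p.1 p.2) (q N, v N) (0, x).
  pose G := \col_i L (delta_mx i 0).
  pose lv := fun k => if (k == N)%N then - G else lam k.
  pose lq := fun k => match k with 0%N => 0 | k'.+1 =>
     h^-1 *: ((if (k' == 0)%N then nu else lv k') - lv k) end.
  have Hrepr : forall x, dotv G x = L x.
    apply: grad_repr => [a b|c a]; rewrite /L.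
      by rewrite pair0D linearD.
    by rewrite pair0Z linearZ.
  exists v, lq, lv; split; [|split; [|split; [|split]]].
  + move=> k /andP [k1 kN]; rewrite /lv ifN //.
    by rewrite ltn_eqF // (leq_ltn_trans kN) // ltn_predL.
  + move=> k /andP [k1 _]; rewrite /lq.
    by rewrite eqn0Ngt k1.
  + by move=> k kN; rewrite /v VfE.
  + by rewrite /v VfN.
  + move=> dq dv dlq dlv dU1 dU2 dmu dnu.
    have HT := Hst dq dlv dU1 dU2 dmu dnu.
    have HPh := @Phi_derive R n m f rho phi h alpha gamma N HFd HRd HPd q dq U1 dU1 U2 dU2
      v dv lq dlq lv dlv nu dnu (fun k _ => erefl).
    have E : (fun t => Jdir1 f rho g phi q0 dq0 h alpha gamma N (pert q dq t) (pert v dv t)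
               (pert lq dlq t) (pert lv dlv t) (pert U1 dU1 t) (pert U2 dU2 t)
               (mu + t *: dmu) (nu + t *: dnu)) =
             (fun t => JtildeE f rho g phi q0 dq0 h alpha gamma N (pert q dq t) (pert lam dlv t)
               (pert U1 dU1 t) (pert U2 dU2 t) (mu + t *: dmu) (nu + t *: dnu)
             + Phi f rho phi h alpha gamma N (pert q dq t) (pert v dv t)
               (pert lq dlq t) (pert lv dlv t) (pert U1 dU1 t) (pert U2 dU2 t)
               (nu + t *: dnu)).
      apply/funext => t; rewrite Jident //; congr (_ + _).
      apply: JtildeE_lam => // k /andP [k1 kN]; rewrite /pert /lv ifN //.
      by rewrite ltn_eqF // (leq_ltn_trans kN) // ltn_predL.
    rewrite E; apply: (is_derive_eq (isdD HT HPh)).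
    apply: (etrans (add0r _)).
    apply: (@final_alg R n h N hN hh G nu L lq lv
      (fun k => dv k - 'D_1 (fun t => Vf f rho h alpha gamma N (pert q dq t) (pert U1 dU1 t) (pert U2 dU2 t) k) 0)).
    * exact: Hrepr.
    * by rewrite /lv eqxx.
    * by [].
    * move=> k k0; rewrite /lq /=; by rewrite eqn0Ngt k0.
Qed.
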